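(* Let $(X,b,m)$ be a connected weighted graph satisfying conditions (B) and (M), let $V:X\to\mathbb{R}$ be bounded, and let $\lambda_V:=\inf\sigma(L_V)$. Let $D\subset X$ be relatively dense with covering radius $R$, and $\Omega:=X\setminus D$. If there exists a regular ground state of $L_V$ with bound $c$, then for all $f\in\ell^2(X,m)$ with $f=0$ on $D$, $$\mathcal{E}_V(f,f)\ge\left(\lambda_V+\frac{1}{c^4\cdot R\cdot\mathrm{vol}[c^2R]}\right)\|f\|^2 .$$
   Context: A weighted graph $(X,b,m)$: $X$ countable, $b:X\times X\to[0,\infty)$ symmetric with $b(x,x)=0$ and $\sum_y b(x,y)<\infty$, $m:X\to(0,\infty)$; $\mathrm{vol}(A):=\sum_{x\in A}m(x)$. Condition (B): $\sup_x\frac{1}{m(x)}\sum_y b(x,y)<\infty$. Condition (M): $\sup_x m(x)<\infty$. On $\ell^2(X,m)$ (norm $\|f\|^2=\sum_x|f(x)|^2m(x)$), $\mathcal{E}(f,g)=\frac12\sum_{x,y}b(x,y)(f(x)-f(y))(\overline{g(x)}-\overline{g(y)})$ and $\mathcal{E}_V(f,g):=\mathcal{E}(f,g)+\sum_x V(x)f(x)\overline{g(x)}$; $L_V$ is the associated bounded selfadjoint operator $(L_Vf)(x)=\frac{1}{m(x)}\left(\sum_y b(x,y)(f(x)-f(y))+V(x)f(x)\right)$. A ground state of $L_V$ is a function $\phi:X\to(0,\infty)$ with $\sum_y b(x,y)\phi(y)<\infty$ for all $x$ and $\frac{1}{m(x)}\left(\sum_y b(x,y)(\phi(x)-\phi(y))+V(x)\phi(x)\right)-\lambda_V\phi(x)\ge0$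 for all $x\in X$; it is regular with bound $c\ge1$ if $1/c\le\phi(x)\le c$ for all $x$. A path is $\gamma=(x_0,\dots,x_k)$ with $b(x_j,x_{j+1})>0$, of length $\sum_{j=0}^{k-1}1/b(x_j,x_{j+1})$; connected means any two points are joined by a path; $d(x,y)$ is the infimum of path lengths; $B_r(x):=\{y:d(x,y)\le r\}$; $\mathrm{vol}[s]:=\sup_{x}\mathrm{vol}(B_s(x))$. The covering radius of $D$ is $\inf\{R>0:\bigcup_{p\in D}B_R(p)=X\}$, and $D$ is relatively dense if it is finite. *)

(* Defs.v *)
From mathcomp Require Import all_boot all_order all_algebra.
From mathcomp Require Import all_classical all_reals all_analysis.
Set Implicit Arguments. Unset Strict Implicit. Unset Printing Implicit Defensive.
Import Order.TTheory GRing.Theory Num.Theory.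
Local Open Scope classical_set_scope.
Local Open Scope ring_scope.

Section WG.
Variables (R : realType) (X : choiceType).

Definition esumX (a : X -> R) : \bar R := (\esum_(x in [set: X]) (a x)%:E)%E.

Definition sumR (a : X -> R) : R :=
  fine (esumX (fun x => Num.max (a x) 0)) - fine (esumX (fun x => Num.max (- a x) 0)).

Variables (b : X -> X -> R) (m : X -> R).

Definition weighted_graph : Prop :=
  countable [set: X] /\
  (forall x y, 0 <= b x y) /\ (forall x y, b x y = b y x) /\ (forall x, b x x = 0) /\
  (forall x, (esumX (b x) < +oo)%E) /\ (forall x, 0 < m x).

Definition condB : Prop := exists C : R, forall x, (m x)^-1 * fine (esumX (b x)) <= C.
Definition condM : Prop := exists M : R, forall x, m x <= M.

Fixpoint is_path (x : X) (s : seq X) : Prop :=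
  match s with [::] => True | y :: s' => 0 < b x y /\ is_path y s' end.
Fixpoint path_length (x : X) (s : seq X) : R :=
  match s with [::] => 0 | y :: s' => (b x y)^-1 + path_length y s' end.
Definition path_from_to (x y : X) (s : seq X) : Prop := is_path x s /\ last x s = y.

Definition connected_graph : Prop := forall x y, exists s, path_from_to x y s.

Definition dist (x y : X) : R := inf [set path_length x s | s in path_from_to x y].
Definition ball (x : X) (r : R) : set X := [set y | dist x y <= r].

Definition vol (A : set X) : \bar R := (\esum_(x in A) (m x)%:E)%E.
Definition volsup (s : R) : \bar R := ereal_sup [set vol (ball x s) | x in [set: X]].

Definition covering_set (D : set X) : set R :=
  [set r | 0 < r /\ forall x, exists p, D p /\ ball p r x].
Definition covering_radius (D : set X) : R := inf (covering_set D).
Definition relatively_dense (D : set X) : Prop := covering_set D !=set0.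

Definition l2 (f : X -> R) : Prop := (esumX (fun x => (f x ^+ 2 * m x)%R) < +oo)%E.
Definition norm2 (f : X -> R) : R := fine (esumX (fun x => f x ^+ 2 * m x)).

Definition energy (f : X -> R) : R :=
  2^-1 * fine (\esum_(p in [set: X * X]) ((b p.1 p.2 * (f p.1 - f p.2) ^+ 2)%R)%:E)%E.
Definition energyV (V : X -> R) (f : X -> R) : R :=
  energy f + sumR (fun x => V x * f x ^+ 2).

Definition LV (V : X -> R) (f : X -> R) (x : X) : R :=
  (m x)^-1 * (sumR (fun y => b x y * (f x - f y)) + V x * f x).

Definition resolvent_point (V : X -> R) (lam : R) : Prop :=
  forall g, l2 g -> exists! f, l2 f /\ (fun x => LV V f x - lam * f x) = g.
Definition spectrum (V : X -> R) : set R := [set lam | ~ resolvent_point V lam].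
Definition bottom_spectrum (V : X -> R) : R := inf (spectrum V).

Definition ground_state (V : X -> R) (phi : X -> R) : Prop :=
  (forall x, 0 < phi x) /\
  (forall x, (esumX (fun y => (b x y * phi y)%R) < +oo)%E) /\
  (forall x, 0 <= LV V phi x - bottom_spectrum V * phi x).
Definition regular_ground_state (V : X -> R) (phi : X -> R) (c : R) : Prop :=
  ground_state V phi /\ 1 <= c /\ (forall x, c^-1 <= phi x /\ phi x <= c).

End WG.

(* Main.v *)
Require Import Defs.
From mathcomp Require Import all_boot all_order all_algebra.
From mathcomp Require Import all_classical all_reals all_analysis.
From mathcomp Require Import ring lra.
From mathcomp Require finmap.
Set Implicit Arguments. Unset Strict Implicit. Unset Printing Implicit Defensive.
Import Order.TTheory GRing.Theory Num.Theory.
Local Open Scope classical_set_scope.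
Local Open Scope ring_scope.

Section Gen.
Variables (R : realType) (T : choiceType).
Implicit Types (a w : T -> R) (s t : seq T).

Definition Sm a : R := fine (\esum_(x in [set: T]) (a x)%:E)%E.
Definition nn a := forall x, 0 <= a x.
Definition sm a := nn a /\ (\esum_(x in [set: T]) (a x)%:E < +oo)%E.

Lemma sum_sub a s t : nn a -> uniq s -> uniq t -> {subset s <= t} ->
  \sum_(x <- s) a x <= \sum_(x <- t) a x.
Proof.
move=> a0 us ut st.
rewrite [X in _ <= X](bigID (fun x => x \in s)) /= -[X in X <= _]addr0.
apply: lerD; last first.
  by apply: sumr_ge0 => i _.
rewrite -[X in _ <= X]big_filter le_eqVlt; apply/orP; left; apply/eqP; apply: perm_big.
apply: uniq_perm => //; first exact: filter_uniq.
by move=> x; rewrite mem_filter; case: (boolP (x \in s)) => // /st ->.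
Qed.

Lemma esum_ge_seq a s : nn a -> uniq s ->
  ((\sum_(x <- s) a x)%:E <= \esum_(x in [set: T]) (a x)%:E)%E.
Proof.
move=> a0 us; apply: esum_ge; exists [set` s]; first by split.
by rewrite fsumEFin // -fsbig_seq.
Qed.

Lemma esum_le_seq a (B : R) : nn a -> (forall s, uniq s -> \sum_(x <- s) a x <= B) ->
  (\esum_(x in [set: T]) (a x)%:E <= B%:E)%E.
Proof.
move=> a0 H; apply: ge_ereal_sup => _ [A [finA _] <-].
by rewrite fsumEFin // fsbig_finite // lee_fin; apply: H; exact: finmap.fset_uniq.
Qed.

Lemma smE a : sm a -> \esum_(x in [set: T]) (a x)%:E = (Sm a)%:E.
Proof.
move=> [a0 afin]; rewrite /Sm fineK // ge0_fin_numE //.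
by apply: esum_ge0 => x _; rewrite lee_fin.
Qed.

Lemma Sm_ub a s : sm a -> uniq s -> \sum_(x <- s) a x <= Sm a.
Proof. by move=> sa us; rewrite -lee_fin -smE //; apply: esum_ge_seq => //; case: sa. Qed.

Lemma Sm_le a (B : R) : nn a -> (forall s, uniq s -> \sum_(x <- s) a x <= B) ->
  sm a /\ Sm a <= B.
Proof.
move=> a0 H; have h := esum_le_seq a0 H.
have sa : sm a by split => //; apply: le_lt_trans h _; exact: ltry.
by split => //; rewrite -lee_fin -smE.
Qed.

Lemma Sm_ge0 a : nn a -> 0 <= Sm a.
Proof. move=> a0; apply: fine_ge0; apply: esum_ge0 => x _; rewrite lee_fin. exact: a0. Qed.

Lemma Sm_approx a e : sm a -> 0 < e -> exists s, uniq s /\ Sm a - e < \sum_(x <- s) a x.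
Proof.
move=> sa e0; apply/not_existsP => H.
have : sm a /\ Sm a <= Sm a - e.
  apply: Sm_le; first by case: sa.
  move=> s us; move: (H s) => /not_andP [//|/negP]; rewrite -leNgt //.
by case=> _; lra.
Qed.


Lemma le_eps (x y : R) : (forall e, 0 < e -> x <= y + e) -> x <= y.
Proof.
move=> H; rewrite leNgt; apply/negP => yx.
have := H ((x - y) / 2); rewrite divr_gt0 ?subr_gt0 // => /(_ isT). lra.
Qed.

Lemma sum_undup_l a s1 s2 : nn a -> uniq s1 ->
  \sum_(x <- s1) a x <= \sum_(x <- undup (s1 ++ s2)) a x.
Proof.
move=> a0 u1; apply: sum_sub => //; first exact: undup_uniq.
by move=> x xs; rewrite mem_undup mem_cat xs.
Qed.

Lemma sum_undup_r a s1 s2 : nn a -> uniq s2 ->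
  \sum_(x <- s2) a x <= \sum_(x <- undup (s1 ++ s2)) a x.
Proof.
move=> a0 u1; apply: sum_sub => //; first exact: undup_uniq.
by move=> x xs; rewrite mem_undup mem_cat xs orbT.
Qed.

Lemma Sm_add a b : sm a -> sm b -> sm (fun x => a x + b x) /\ Sm (fun x => a x + b x) = Sm a + Sm b.
Proof.
move=> sa sb; have a0 : nn a by case: sa.
have b0 : nn b by case: sb.
have ab0 : nn (fun x => a x + b x) by move=> x; apply: addr_ge0.
have [sab le1] : sm (fun x => a x + b x) /\ Sm (fun x => a x + b x) <= Sm a + Sm b.
  apply: Sm_le => // s us; rewrite big_split /=; apply: lerD; exact: Sm_ub.
split => //; apply/eqP; rewrite eq_le le1 /=; apply: le_eps => e e0.
have e20 : 0 < e / 2 by rewrite divr_gt0.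
have [s1 [u1 h1]] := Sm_approx sa e20.
have [s2 [u2 h2]] := Sm_approx sb e20.
have := Sm_ub sab (undup_uniq (s1 ++ s2)); rewrite big_split /=.
have := sum_undup_l s2 a0 u1; have := sum_undup_r s1 b0 u2. lra.
Qed.

Lemma tail_le a w s : nn a -> sm w -> (forall x, a x <= w x) -> uniq s ->
  sm a /\ Sm a - \sum_(x <- s) a x <= Sm w - \sum_(x <- s) w x.
Proof.
move=> a0 sw aw us.
have [sa _] : sm a /\ Sm a <= Sm w.
  apply: Sm_le => // t ut; apply: le_trans (Sm_ub sw ut).
  by apply: ler_sum => i _.
have r0 : nn (fun x => w x - a x) by move=> x; rewrite subr_ge0.
have [sr _] : sm (fun x => w x - a x) /\ Sm (fun x => w x - a x) <= Sm w.
  apply: Sm_le => // t ut; apply: le_trans (Sm_ub sw ut).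
  apply: ler_sum => i _; have := a0 i; lra.
have [_ e] := Sm_add sa sr.
have ew : (fun x => a x + (w x - a x)) = w by apply: funext => x; ring.
rewrite ew in e; split => //.
have := Sm_ub sr us; rewrite sumrB; lra.
Qed.

Lemma Sm_le_pt a w : nn a -> sm w -> (forall x, a x <= w x) -> sm a /\ Sm a <= Sm w.
Proof.
move=> a0 sw aw; have [sa h] := tail_le a0 sw aw (s := [::]) isT.
by split => //; move: h; rewrite !big_nil !subr0.
Qed.

Lemma Sm_scale a k : sm a -> 0 <= k -> sm (fun x => k * a x) /\ Sm (fun x => k * a x) = k * Sm a.
Proof.
move=> sa k0; have a0 : nn a by case: sa.
have ka0 : nn (fun x => k * a x) by move=> x; apply: mulr_ge0.
have [ska le1] : sm (fun x => k * a x) /\ Sm (fun x => k * a x) <= k * Sm a.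
  apply: Sm_le => // s us; rewrite -mulr_sumr; apply: ler_wpM2l => //; exact: Sm_ub.
split => //; apply/eqP; rewrite eq_le le1 /=.
have [k0e|kp] := eqVneq k 0; first by rewrite k0e mul0r; apply: Sm_ge0 => x; rewrite mul0r.
have kgt : 0 < k by rewrite lt_def kp.
apply: le_eps => e e0.
have ek : 0 < e / k by rewrite divr_gt0.
have [s1 [u1 h1]] := Sm_approx sa ek.
have := Sm_ub ska u1; rewrite -mulr_sumr => h.
have : k * (Sm a - e / k) <= k * \sum_(x <- s1) a x by rewrite ler_wpM2l // ltW.
rewrite mulrBr mulrCA divff ?mulr1 //. lra.
Qed.

Lemma Sm_inv a (h : T -> T) : sm a -> involutive h -> sm (fun x => a (h x)) /\ Sm (fun x => a (h x)) = Sm a.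
Proof.
move=> sa hh; have a0 : nn a by case: sa.
have ha0 : nn (fun x => a (h x)) by move=> x.
have hinj : injective h := inv_inj hh.
have key : forall b, nn b -> sm b -> forall s, uniq s -> \sum_(x <- s) b (h x) <= Sm b.
  move=> b b0 sb s us; rewrite -(big_map h xpredT b); apply: Sm_ub => //.
  by rewrite map_inj_uniq.
have [sha le1] := Sm_le ha0 (key a a0 sa).
split => //; apply/eqP; rewrite eq_le le1 /=.
suff : sm a /\ Sm a <= Sm (fun x => a (h x)) by case.
apply: Sm_le => // s us.
have := key _ ha0 sha s us; congr (_ <= _); apply: eq_bigr => i _; by rewrite hh.
Qed.

Lemma maxpn (r : R) : Num.max r 0 + Num.max (- r) 0 = `|r| /\ Num.max r 0 - Num.max (- r) 0 = r.
Proof.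
rewrite !maxEle; case: (lerP 0 r) => h.
- rewrite ger0_norm //; case: ifPn => h1; case: ifPn => h2; split; lra.
- rewrite ltr0_norm //; case: ifPn => h1; case: ifPn => h2; split; lra.
Qed.

Definition posp a := fun x => Num.max (a x) 0.
Definition negp a := fun x => Num.max (- a x) 0.

Lemma sumR_gen_approx a w s : sm w -> (forall x, `|a x| <= w x) -> uniq s ->
  sm (posp a) /\ sm (negp a) /\
  `|(Sm (posp a) - Sm (negp a)) - \sum_(x <- s) a x| <= Sm w - \sum_(x <- s) w x.
Proof.
move=> sw aw us.
have p0 : nn (posp a) by move=> x; rewrite /posp le_max lexx orbT.
have n0 : nn (negp a) by move=> x; rewrite /negp le_max lexx orbT.
have pn0 : nn (fun x => posp a x + negp a x) by move=> x; apply: addr_ge0.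
have pnw : forall x, posp a x + negp a x <= w x.
  by move=> x; apply: le_trans (aw x); rewrite /posp /negp (maxpn (a x)).1.
have [spn tl] := tail_le pn0 sw pnw us.
have [sp _] : sm (posp a) /\ Sm (posp a) <= Sm (fun x => posp a x + negp a x).
  by apply: (Sm_le_pt p0 spn) => x; have := n0 x; lra.
have [sn _] : sm (negp a) /\ Sm (negp a) <= Sm (fun x => posp a x + negp a x).
  by apply: (Sm_le_pt n0 spn) => x; have := p0 x; lra.
have [_ ea] := Sm_add sp sn.
do 2 split => //; apply: le_trans tl.
have -> : \sum_(x <- s) a x = \sum_(x <- s) posp a x - \sum_(x <- s) negp a x.
  by rewrite -sumrB; apply: eq_bigr => i _; rewrite /posp /negp (maxpn (a i)).2.
rewrite ea big_split /=.
have t1 := tail_le p0 sp (fun x => lexx _) us.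
have hp : \sum_(x <- s) posp a x <= Sm (posp a) := Sm_ub sp us.
have hn : \sum_(x <- s) negp a x <= Sm (negp a) := Sm_ub sn us.
rewrite ler_norml; apply/andP; split; lra.
Qed.

End Gen.

Section Paths.
Variables (R : realType) (X : choiceType) (b : X -> X -> R).
Hypothesis b0 : forall x y, 0 <= b x y.
Hypothesis bsym : forall x y, b x y = b y x.

Fixpoint steps (x : X) (s : seq X) : seq (X * X) :=
  if s is y :: s' then (x, y) :: steps y s' else [::].

Lemma steps_cat x s1 s2 : steps x (s1 ++ s2) = steps x s1 ++ steps (last x s1) s2.
Proof. by elim: s1 x => [|y s1 IH] x //=; rewrite IH. Qed.

Lemma is_path_cat x s1 s2 : is_path b x (s1 ++ s2) <-> is_path b x s1 /\ is_path b (last x s1) s2.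
Proof.
elim: s1 x => [|y s1 IH] x /=; first by tauto.
rewrite IH; tauto.
Qed.

Lemma path_length_cat x s1 s2 :
  path_length b x (s1 ++ s2) = path_length b x s1 + path_length b (last x s1) s2.
Proof. elim: s1 x => [|y s1 IH] x /=; first by rewrite add0r. by rewrite IH addrA. Qed.

Lemma path_length_ge0 x s : 0 <= path_length b x s.
Proof. elim: s x => [|y s IH] x //=; apply: addr_ge0 => //; rewrite invr_ge0 //. Qed.

Lemma is_path_rcons x s y : is_path b x (rcons s y) <-> is_path b x s /\ 0 < b (last x s) y.
Proof. by rewrite -cats1 is_path_cat /=; split => [[? [? _]]|[? ?]]. Qed.

Lemma path_length_rcons x s y :
  path_length b x (rcons s y) = path_length b x s + (b (last x s) y)^-1.
Proof. by rewrite -cats1 path_length_cat /= addr0. Qed.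

Lemma path_rev x s : is_path b x s ->
  is_path b (last x s) (rev (belast x s)) /\ last (last x s) (rev (belast x s)) = x /\
  path_length b (last x s) (rev (belast x s)) = path_length b x s.
Proof.
elim: s x => [|y s IH] x //=; case=> bxy py.
have [p1 [l1 e1]] := IH y py.
rewrite rev_cons is_path_rcons path_length_rcons last_rcons l1 e1 bsym.
by do 2 split => //; rewrite addrC.
Qed.

Lemma dist_sym x y : dist b x y = dist b y x.
Proof.
rewrite /dist; congr inf; apply/seteqP; split => _ [s [ps ls] <-].
- have [p1 [l1 e1]] := path_rev ps; rewrite -e1 ls.
  by exists (rev (belast x s)) => //; split => //; rewrite -ls.
- have [p1 [l1 e1]] := path_rev ps; rewrite -e1 ls.
  by exists (rev (belast y s)) => //; split => //; rewrite -ls.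
Qed.

Lemma dist_le x y s : path_from_to b x y s -> dist b x y <= path_length b x s.
Proof.
move=> h; apply: ge_inf; last by exists s.
by exists 0 => _ [t _ <-]; exact: path_length_ge0.
Qed.

Lemma path_prefix x s v : is_path b x s -> v \in x :: s ->
  exists p, path_from_to b x v p /\ path_length b x p <= path_length b x s.
Proof.
elim: s x => [|y s IH] x /=.
  by move=> _; rewrite inE => /eqP ->; exists [::]; split => //.
case=> bxy py; rewrite inE => /orP [/eqP ->|vin].
  exists [::]; split => //=; apply: addr_ge0; [rewrite invr_ge0 //|exact: path_length_ge0].
have [p [[pp lp] le]] := IH y py vin.
exists (y :: p); split; first by split.
by rewrite /= lerD2l.
Qed.

Lemma loop_remove x s : is_path b x s -> ~~ uniq (x :: s) ->
  exists s', [/\ is_path b x s', last x s' = last x s,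
     path_length b x s' < path_length b x s, (size s' < size s)%N &
     {subset steps x s' <= steps x s}].
Proof.
elim: s x => [|y s IH] x; first by [].
move=> pxs; have [bxy py] := pxs.
rewrite [uniq _]/= negb_and negbK => /orP [xin|nu].
- clear IH py bxy; move: pxs; case/splitPr: xin => p1 p2 pxs.
  have [pp1 [bl pp2]] := (is_path_cat x p1 (x :: p2)).1 pxs.
  exists p2; split => //.
  + by rewrite last_cat.
  + rewrite path_length_cat /=.
    have := path_length_ge0 x p1; have : 0 < (b (last x p1) x)^-1 by rewrite invr_gt0.
    lra.
  + by rewrite size_cat /= addnS ltnS leq_addl.
  + move=> e ein.
    by rewrite steps_cat /= mem_cat inE ein !orbT.
- have [s' [p' l' len' sz' sub']] := IH y py nu.
  exists (y :: s'); split => //=.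
  + by rewrite ltrD2l.
  + move=> e; rewrite !inE => /orP [->//|/sub' ->]; by rewrite orbT.
Qed.


Lemma steps_mem x s e : e \in steps x s -> e.1 \in x :: s /\ e.2 \in s.
Proof.
elim: s x => [|y s IH] x //=; rewrite inE => /orP [/eqP ->|/IH [h1 h2]] /=.
  by split; rewrite !inE eqxx ?orbT.
split; last by rewrite inE h2 orbT.
by rewrite inE h1 orbT.
Qed.

Lemma steps_uniq x s : uniq (x :: s) -> uniq (steps x s).
Proof.
elim: s x => [|y s IH] x //= /andP [xn /andP [yn us]].
rewrite IH ?andbT /=; last by rewrite yn.
apply/negP => /steps_mem [/= h _]; by rewrite h in xn.
Qed.

Lemma steps_norev x s u v : uniq (x :: s) -> (u, v) \in steps x s -> (v, u) \in steps x s -> False.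
Proof.
elim: s x => [|y s IH] x //= /andP [xn /andP [yn us]]; rewrite !inE.
move=> /orP [/eqP [-> ->]|h1] /orP [/eqP [e1 e2]|h2].
- by move: xn; rewrite e1 inE eqxx.
- by have [_ /= h] := steps_mem h2; move: xn; rewrite inE h orbT.
- by have [_ /= h] := steps_mem h1; move: xn; rewrite -e1 inE h orbT.
- by apply: (IH y); rewrite //= yn.
Qed.

Lemma path_CS (g : X -> R) x s : is_path b x s ->
  (g x - g (last x s)) ^+ 2 <=
  path_length b x s * \sum_(e <- steps x s) b e.1 e.2 * (g e.1 - g e.2) ^+ 2.
Proof.
elim: s x => [|y s IH] x /=; first by rewrite subrr expr0n /= mul0r.
case=> bxy py; have := IH y py; rewrite big_cons /=.
set L := path_length b y s; set Q := \sum_(e <- steps y s) _.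
have L0 : 0 <= L by exact: path_length_ge0.
have Q0 : 0 <= Q by apply: sumr_ge0 => e _; apply: mulr_ge0 => //; exact: sqr_ge0.
set A := g y - g (last y s); set a := g x - g y.
have -> : g x - g (last y s) = a + A by rewrite /a /A; ring.
move=> hA.
set bb := b x y.
have hb : bb^-1 * bb = 1 by rewrite mulVf // gt_eqF.
have ib : 0 < bb^-1 by rewrite invr_gt0.
suff : 2 * a * A <= bb^-1 * Q + L * (bb * a ^+ 2).
  move=> h; rewrite mulrDl !mulrDr.
  have -> : bb^-1 * (bb * a ^+ 2) = a ^+ 2 by rewrite mulrA hb mul1r.
  rewrite sqrrD. lra.
have [L00|Lp] := eqVneq L 0.
  have A0 : A = 0 by apply/eqP; rewrite -sqrf_eq0 eq_le sqr_ge0 andbT; move: hA; rewrite L00 mul0r.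
  by rewrite A0 mulr0 L00 mul0r addr0; apply: mulr_ge0; [exact: ltW|].
have Lgt : 0 < L by rewrite lt_def Lp.
(* L t^2 - 2 t A + Q >= 0 with t = b a, divided by b *)
have key : 2 * (bb * a) * A <= Q + L * (bb * a) ^+ 2.
  have : 0 <= (L * (bb * a) - A) ^+ 2 by exact: sqr_ge0.
  move=> hsq.
  have : 0 <= L * (Q + L * (bb * a) ^+ 2 - 2 * (bb * a) * A).
    have -> : L * (Q + L * (bb * a) ^+ 2 - 2 * (bb * a) * A) = (L * (bb * a) - A) ^+ 2 + (L * Q - A ^+ 2) by ring.
    by apply: addr_ge0 => //; rewrite subr_ge0.
  rewrite pmulr_rge0 // subr_ge0 //.
have := ler_wpM2l (ltW ib) key.
have bn : bb != 0 by rewrite gt_eqF.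
have -> : bb^-1 * (2 * (bb * a) * A) = 2 * a * A by field.
have -> : bb^-1 * (Q + L * (bb * a) ^+ 2) = bb^-1 * Q + L * (bb * a ^+ 2) by field.
done.
Qed.

End Paths.

Section Fin.
Variables (R : realType) (X : choiceType) (b : X -> X -> R).
Hypothesis b0 : forall x y, 0 <= b x y.
Variables (B0 L : R).
Hypothesis B0p : 0 < B0.
Hypothesis bB0 : forall x y, b x y <= B0.
Hypothesis Lp : 0 < L.
Variable NB : X -> seq X.
Hypothesis NBP : forall x y, y \in NB x <-> L^-1 <= b x y.

Fixpoint allpaths (k : nat) (x : X) : seq (seq X) :=
  if k is k'.+1 then [::] :: flatten [seq map (cons y) (allpaths k' y) | y <- NB x]
  else [:: [::]].

Lemma in_allpaths k x s : (size s <= k)%N ->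
  (forall e, e \in steps x s -> L^-1 <= b e.1 e.2) -> s \in allpaths k x.
Proof.
elim: k x s => [|k IH] x [|y s] //=; try by rewrite inE eqxx.
rewrite ltnS => sz hs; rewrite inE; apply/orP; right.
apply/flatten_mapP; exists y.
  by apply/NBP; apply: (hs (x, y)); rewrite inE eqxx.
apply: map_f; apply: IH => // e ein; apply: hs; by rewrite inE ein orbT.
Qed.

Lemma step_le_length x s e : is_path b x s -> e \in steps x s -> (b e.1 e.2)^-1 <= path_length b x s.
Proof.
elim: s x => [|y s IH] x //= [bxy py]; rewrite inE => /orP [/eqP -> /=|ein].
  by rewrite lerDl path_length_ge0.
apply: le_trans (IH y py ein) _; rewrite lerDr invr_ge0; exact: ltW.
Qed.

Lemma short_big x s : is_path b x s -> path_length b x s <= L ->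
  forall e, e \in steps x s -> L^-1 <= b e.1 e.2.
Proof.
move=> ps pl e ein; have := step_le_length ps ein => h.
have be : 0 < b e.1 e.2.
  elim: s x ps ein {pl h} => [|y s IH] x //= [bxy py]; rewrite inE => /orP [/eqP -> //|].
  exact: IH.
rewrite -(invrK (b e.1 e.2)) lef_pV2 ?posrE ?invr_gt0 //; exact: le_trans h pl.
Qed.

Lemma length_size x s : is_path b x s -> (size s)%:R * B0^-1 <= path_length b x s.
Proof.
elim: s x => [|y s IH] x //=; first by rewrite mul0r.
case=> bxy py; rewrite -addn1 natrD mulrDl mul1r addrC; apply: lerD; last exact: IH.
by rewrite lef_pV2 ?posrE.
Qed.

Lemma min_in (T : eqType) (Lst : seq T) (P : T -> Prop) (l : T -> R) :
  (exists2 s, s \in Lst & P s) ->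
  exists s, [/\ s \in Lst, P s & forall t, t \in Lst -> P t -> l s <= l t].
Proof.
elim: Lst => [[s]//|a Lst IH] [s sin Ps].
have [Pa|nPa] := pselect (P a); last first.
  have [t tin Pt] : exists2 t, t \in Lst & P t.
    by move: sin; rewrite inE => /orP [/eqP e|]; [move: Ps; rewrite e|exists s].
  have [m [min Pm mm]] := IH (ex_intro2 _ _ t tin Pt).
  exists m; split => //; first by rewrite inE min orbT.
  by move=> u; rewrite inE => /orP [/eqP ->//|/mm].
have [ex|nex] := pselect (exists2 t, t \in Lst & P t); last first.
  exists a; split => //; first by rewrite inE eqxx.
  move=> u; rewrite inE => /orP [/eqP ->//|uin Pu]; by case: nex; exists u.
have [m [min Pm mm]] := IH ex.
have [lam|lma] := lerP (l a) (l m).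
  exists a; split => //; first by rewrite inE eqxx.
  move=> u; rewrite inE => /orP [/eqP ->//|uin Pu]; exact: le_trans lam (mm u uin Pu).
exists m; split => //; first by rewrite inE min orbT.
move=> u; rewrite inE => /orP [/eqP ->|uin Pu]; [move=> _; exact: ltW|exact: mm].
Qed.

Lemma good_path (D : set X) (Rc : R) x : 0 <= Rc -> Rc + 1 = L ->
  (forall d, 0 < d -> exists s, [/\ is_path b x s, D (last x s) & path_length b x s <= Rc + d]) ->
  exists s, [/\ is_path b x s, D (last x s), uniq (x :: s) & path_length b x s <= Rc].
Proof.
move=> Rc0 eL H.
pose K := Num.bound (L * B0).
have KP : L * B0 < K%:R by apply: archi_boundP; apply: mulr_ge0; apply: ltW.
pose Lst := allpaths K x.
have inL : forall s, is_path b x s -> path_length b x s <= L -> s \in Lst.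
  move=> s ps pl; apply: in_allpaths; last exact: short_big.
  have := length_size ps => h.
  have : (size s)%:R < K%:R :> R.
    apply: le_lt_trans KP; apply: le_trans (_ : path_length b x s * B0 <= _).
      have iB : 0 < B0^-1 by rewrite invr_gt0.
      by rewrite -(ler_pM2r iB) -mulrA mulfV ?gt_eqF // mulr1.
    by rewrite ler_pM2r.
  by rewrite ltr_nat => /ltnW.
pose P s := is_path b x s /\ D (last x s).
have [s1 [ps1 D1 l1]] := H 1 ltr01.
have l1' : path_length b x s1 <= L by rewrite -eL.
have [s [sin [ps Ds] smin]] := min_in (fun s => path_length b x s) (ex_intro2 (fun s => s \in Lst) P s1 (inL s1 ps1 l1') (conj ps1 D1)).
have sR : path_length b x s <= Rc.
  apply: le_eps => d d0.
  have md : 0 < Num.min d 1 by rewrite lt_min d0 ltr01.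
  have [t [pt Dt lt]] := H (Num.min d 1) md.
  have tin : t \in Lst.
    apply: inL pt (le_trans lt _); by rewrite -eL lerD2l ge_min lexx orbT.
  apply: le_trans (smin t tin (conj pt Dt)) _; apply: le_trans lt _.
  by rewrite lerD2l ge_min lexx.
exists s; split => //.
apply/negPn/negP => nu.
have [s' [ps' ls' lens' szs' subs']] := loop_remove (b := b) b0 ps nu.
have s'in : s' \in Lst.
  apply: inL ps' _; apply: le_trans (ltW lens') _; apply: le_trans sR _; rewrite -eL lerDl //.
have Ds' : D (last x s') by rewrite ls'.
have := smin s' s'in (conj ps' Ds'); rewrite leNgt lens' //.
Qed.

End Fin.

Section Pairs.
Variables (R : realType) (T1 T2 : choiceType).

Lemma allpairs_uniq2 (X1 : seq T1) (Y1 : seq T2) : uniq X1 -> uniq Y1 ->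
  uniq [seq (x, y) | x <- X1, y <- Y1].
Proof. by move=> u1 u2; apply: allpairs_uniq => // -[? ?] [? ?]. Qed.

Lemma pair_sub (F : T1 * T2 -> R) s X1 Y1 : (forall p, 0 <= F p) -> uniq s -> uniq X1 -> uniq Y1 ->
  (forall p, p \in s -> (p.1 \in X1) && (p.2 \in Y1)) ->
  \sum_(p <- s) F p <= \sum_(x <- X1) \sum_(y <- Y1) F (x, y).
Proof.
move=> F0 us u1 u2 H; rewrite -big_allpairs; apply: sum_sub => //.
  exact: allpairs_uniq2.
by move=> [x y] /H /andP [hx hy]; exact: allpairs_f.
Qed.

Lemma pairs_le_Sm (F : T1 * T2 -> R) X1 Y1 : sm F -> uniq X1 -> uniq Y1 ->
  \sum_(x <- X1) \sum_(y <- Y1) F (x, y) <= Sm F.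
Proof. by move=> sF u1 u2; rewrite -big_allpairs; apply: Sm_ub => //; exact: allpairs_uniq2. Qed.

Lemma row_sm (F : T1 * T2 -> R) x : sm F -> sm (fun y => F (x, y)) /\ Sm (fun y => F (x, y)) <= Sm F.
Proof.
move=> sF; have F0 : nn F by case: sF.
apply: Sm_le => [y|Y uY] //.
have := pairs_le_Sm sF (isT : uniq [:: x]) uY; by rewrite big_seq1.
Qed.

Lemma rows_approx (F : T1 * T2 -> R) (X1 : seq T1) e : sm F -> 0 < e ->
  exists Y, uniq Y /\ \sum_(x <- X1) Sm (fun y => F (x, y)) - e <= \sum_(x <- X1) \sum_(y <- Y) F (x, y).
Proof.
move=> sF; have F0 : nn F by case: sF.
elim: X1 e => [|x X1 IH] e e0.
  by exists [::]; split => //; rewrite !big_nil sub0r oppr_le0 ltW.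
have e2 : 0 < e / 2 by rewrite divr_gt0.
have [Y1 [u1 h1]] := IH _ e2.
have [sr _] := row_sm x sF.
have [Y2 [u2 h2]] := Sm_approx sr e2.
exists (undup (Y1 ++ Y2)); split; first exact: undup_uniq.
rewrite !big_cons.
have h3 : \sum_(x <- X1) \sum_(y <- Y1) F (x, y) <= \sum_(x <- X1) \sum_(y <- undup (Y1 ++ Y2)) F (x, y).
  by apply: ler_sum => i _; apply: sum_undup_l => // y.
have h4 : \sum_(y <- Y2) F (x, y) <= \sum_(y <- undup (Y1 ++ Y2)) F (x, y).
  by apply: sum_undup_r => // y.
lra.
Qed.

Lemma rows_le (F : T1 * T2 -> R) (X1 : seq T1) : sm F -> uniq X1 ->
  \sum_(x <- X1) Sm (fun y => F (x, y)) <= Sm F.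
Proof.
move=> sF u1; apply: le_eps => e e0.
have [Y [uY h]] := rows_approx X1 sF e0.
have := pairs_le_Sm sF u1 uY; lra.
Qed.

End Pairs.

Section PartA.
Variables (R : realType) (X : choiceType) (b : X -> X -> R) (m V phi f : X -> R) (c lam C : R).
Hypothesis b0 : forall x y, 0 <= b x y.
Hypothesis bsym : forall x y, b x y = b y x.
Hypothesis bsm : forall x, sm (b x).
Hypothesis m0 : forall x, 0 < m x.
Hypothesis C0 : 0 <= C.
Hypothesis Cb : forall x, Sm (b x) <= C * m x.
Hypothesis phi0 : forall x, 0 < phi x.
Hypothesis phic : forall x, c^-1 <= phi x /\ phi x <= c.
Hypothesis c1 : 1 <= c.
Hypothesis gs : forall x, 0 <= LV b m V phi x - lam * phi x.
Hypothesis fl2 : sm (fun x => f x ^+ 2 * m x).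
Hypothesis Vsm : sm (fun x => `|V x| * f x ^+ 2).

Definition T2 (p : X * X) := f p.1 ^+ 2 * b p.1 p.2.
Definition gg x := f x / phi x.
Definition hh (p : X * X) := b p.1 p.2 * (gg p.1 - gg p.2) ^+ 2.
Definition Q2 (p : X * X) := b p.1 p.2 * phi p.1 * phi p.2 * (gg p.1 - gg p.2) ^+ 2.
Definition P2 (p : X * X) := b p.1 p.2 * (f p.1 - f p.2) ^+ 2.
Definition N := Sm (fun x => f x ^+ 2 * m x).


Lemma sm_T2 : sm T2.
Proof.
have T0 : nn T2 by move=> p; apply: mulr_ge0 => //; exact: sqr_ge0.
suff : sm T2 /\ Sm T2 <= Sm (fun x => C * (f x ^+ 2 * m x)) by case.
apply: Sm_le => // s us.
apply: le_trans (pair_sub (Y1 := undup (map snd s)) T0 us (undup_uniq (map fst s)) (undup_uniq _) _) _.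
  by move=> p ps; rewrite !mem_undup !map_f.
apply: le_trans (_ : \sum_(x <- undup (map fst s)) C * (f x ^+ 2 * m x) <= _); last first.
  apply: Sm_ub; last exact: undup_uniq.
  by have [] := Sm_scale fl2 C0.
apply: ler_sum => x _; rewrite /T2 /= -mulr_sumr.
rewrite mulrCA; apply: ler_wpM2l; first exact: sqr_ge0.
apply: le_trans (Cb x); apply: Sm_ub => //; exact: undup_uniq.
Qed.


Definition W2 (p : X * X) := T2 p + T2 (p.2, p.1).

Lemma sm_W2 : sm W2.
Proof.
have inv : involutive (fun p : X * X => (p.2, p.1)) by case.
have [s1 _] := Sm_inv sm_T2 inv.
by have [] := Sm_add sm_T2 s1.
Qed.

Lemma phiV x : (phi x)^-1 <= c.
Proof.
have c0 : 0 < c by apply: lt_le_trans ltr01 c1.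
by rewrite -(invrK c) lef_pV2 ?posrE ?invr_gt0 //; case: (phic x).
Qed.

Lemma gg2 x : gg x ^+ 2 <= c ^+ 2 * f x ^+ 2.
Proof.
rewrite /gg exprMn mulrC; apply: ler_wpM2r; first exact: sqr_ge0.
rewrite lerXn2r ?nnegrE ?invr_ge0 ?(ltW (phi0 x)) //; last exact: phiV.
apply: le_trans (ltW ltr01) c1.
Qed.

Lemma W2E p : W2 p = b p.1 p.2 * (f p.1 ^+ 2 + f p.2 ^+ 2).
Proof. by rewrite /W2 /T2 /= bsym; ring. Qed.

Lemma hh_le p : hh p <= 2 * c ^+ 2 * W2 p.
Proof.
rewrite W2E /hh; set x := p.1; set y := p.2.
have h1 : (gg x - gg y) ^+ 2 <= 2 * (gg x ^+ 2 + gg y ^+ 2).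
  have := sqr_ge0 (gg x + gg y); lra.
have := gg2 x; have := gg2 y; have := b0 x y => bb g1 g2.
have : (gg x - gg y) ^+ 2 <= 2 * c ^+ 2 * (f x ^+ 2 + f y ^+ 2) by lra.
move=> h; have := ler_wpM2l bb h; lra.
Qed.

Lemma sm_hh : sm hh.
Proof.
have c0 : 0 <= 2 * c ^+ 2 by apply: mulr_ge0 => //; exact: sqr_ge0.
have [s1 _] := Sm_scale sm_W2 c0.
suff : sm hh /\ Sm hh <= Sm (fun p => 2 * c ^+ 2 * W2 p) by case.
apply: Sm_le_pt => // p; first by apply: mulr_ge0 => //; exact: sqr_ge0.
exact: hh_le.
Qed.

Lemma phiphi x y : phi x * phi y <= c ^+ 2.
Proof.
rewrite expr2; have [_ h1] := phic x; have [_ h2] := phic y.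
apply: ler_pM => //; exact: ltW.
Qed.

Lemma phiphi_ge x y : c ^-2 <= phi x * phi y.
Proof.
rewrite -exprVn expr2; have [h1 _] := phic x; have [h2 _] := phic y.
have c0 : 0 < c by apply: lt_le_trans ltr01 c1.
apply: ler_pM => //; rewrite invr_ge0 ltW //.
Qed.

Lemma sm_Q2 : sm Q2 /\ Sm Q2 <= c ^+ 2 * Sm hh.
Proof.
have c0 : 0 <= c ^+ 2 by exact: sqr_ge0.
have [s1 e1] := Sm_scale sm_hh c0.
rewrite -e1; apply: Sm_le_pt => // p; rewrite /Q2 /hh.
  apply: mulr_ge0; last exact: sqr_ge0.
  by rewrite -mulrA; apply: mulr_ge0 => //; apply: mulr_ge0; apply: ltW.
have -> : b p.1 p.2 * phi p.1 * phi p.2 * (gg p.1 - gg p.2) ^+ 2 =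
  (phi p.1 * phi p.2) * (b p.1 p.2 * (gg p.1 - gg p.2) ^+ 2) by ring.
apply: ler_wpM2r; last exact: phiphi.
by apply: mulr_ge0 => //; exact: sqr_ge0.
Qed.

Lemma Q2_ge : c ^-2 * Sm hh <= Sm Q2.
Proof.
have c0 : 0 <= c ^-2 by rewrite invr_ge0 sqr_ge0.
have [s1 e1] := Sm_scale sm_hh c0.
have sQ := sm_Q2.1.
suff : sm (fun p => c ^-2 * hh p) /\ Sm (fun p => c ^-2 * hh p) <= Sm Q2 by rewrite -e1; case.
apply: Sm_le_pt => // p.
  by apply: mulr_ge0 => //; apply: mulr_ge0 => //; exact: sqr_ge0.
rewrite /Q2 /hh.
have -> : b p.1 p.2 * phi p.1 * phi p.2 * (gg p.1 - gg p.2) ^+ 2 =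
  (phi p.1 * phi p.2) * (b p.1 p.2 * (gg p.1 - gg p.2) ^+ 2) by ring.
apply: ler_wpM2r; last exact: phiphi_ge.
by apply: mulr_ge0 => //; exact: sqr_ge0.
Qed.

Lemma sm_P2 : sm P2.
Proof.
have c0 : 0 <= 2 :> R by [].
have [s1 _] := Sm_scale sm_W2 c0.
suff : sm P2 /\ Sm P2 <= Sm (fun p => 2 * W2 p) by case.
apply: Sm_le_pt => // p.
  by apply: mulr_ge0 => //; exact: sqr_ge0. rewrite W2E /P2; have := b0 p.1 p.2 => bb.
have h : (f p.1 - f p.2) ^+ 2 <= 2 * (f p.1 ^+ 2 + f p.2 ^+ 2).
  have := sqr_ge0 (f p.1 + f p.2); lra.
have := ler_wpM2l bb h; lra.
Qed.


Definition tau x y := b x y * (phi x - phi y) * f x ^+ 2 / phi x.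

Lemma P2_id x y : P2 (x, y) = Q2 (x, y) + tau x y + tau y x.
Proof.
rewrite /P2 /Q2 /tau /gg /= (bsym y x).
have h1 : phi x != 0 by rewrite gt_eqF.
have h2 : phi y != 0 by rewrite gt_eqF.
field; by rewrite ?h1 ?h2 ?mulf_neq0.
Qed.

Lemma c0 : 0 <= c.
Proof. exact: le_trans (ltW ltr01) c1. Qed.

Lemma tau_row x F : uniq F ->
  f x ^+ 2 * (lam * m x - V x) - c ^+ 2 * f x ^+ 2 * (Sm (b x) - \sum_(y <- F) b x y)
    <= \sum_(y <- F) tau x y.
Proof.
move=> uF.
pose a := fun y => b x y * (phi x - phi y).
have ha : forall y, `|a y| <= c * b x y.
  move=> y; rewrite /a normrM ger0_norm // mulrC; apply: ler_wpM2r => //.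
  have [_ h1] := phic x; have [_ h2] := phic y; have := phi0 x; have := phi0 y.
  move=> p1 p2; rewrite ler_norml; apply/andP; split; lra.
have [sc ec] := Sm_scale (bsm x) c0.
have [_ [_ happ]] := sumR_gen_approx sc ha uF.
have hs : sumR a = Sm (posp a) - Sm (negp a) by [].
have hg := gs x; rewrite /LV -/a in hg.
have mx := m0 x.
have hS : lam * phi x * m x - V x * phi x <= sumR a.
  have : lam * phi x <= (m x)^-1 * (sumR a + V x * phi x) by lra.
  move/(ler_wpM2r (ltW mx)).
  have mn : m x != 0 by rewrite gt_eqF.
  have -> : (m x)^-1 * (sumR a + V x * phi x) * m x = sumR a + V x * phi x by field.
  lra.
rewrite -hs ec -mulr_sumr in happ.
have t0 : 0 <= Sm (b x) - \sum_(y <- F) b x y by rewrite subr_ge0; exact: Sm_ub.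
have hA : lam * phi x * m x - V x * phi x - c * (Sm (b x) - \sum_(y <- F) b x y) <= \sum_(y <- F) a y.
  move: happ; rewrite ler_norml => /andP [h1 h2]. lra.
have -> : \sum_(y <- F) tau x y = (f x ^+ 2 / phi x) * \sum_(y <- F) a y.
  by rewrite mulr_sumr; apply: eq_bigr => y _; rewrite /tau /a; ring.
have k0 : 0 <= f x ^+ 2 / phi x by apply: divr_ge0; [exact: sqr_ge0|exact: ltW].
apply: le_trans (ler_wpM2l k0 hA).
have px : phi x != 0 by rewrite gt_eqF.
have -> : f x ^+ 2 / phi x * (lam * phi x * m x - V x * phi x - c * (Sm (b x) - \sum_(y <- F) b x y))
  = f x ^+ 2 * (lam * m x - V x) - c * f x ^+ 2 * (Sm (b x) - \sum_(y <- F) b x y) * (phi x)^-1 by field.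
rewrite lerD2l lerN2.
have hv := phiV x.
have q0 : 0 <= c * f x ^+ 2 * (Sm (b x) - \sum_(y <- F) b x y).
  by apply: mulr_ge0 => //; apply: mulr_ge0; [exact: c0|exact: sqr_ge0].
apply: le_trans (ler_wpM2l q0 hv) _.
rewrite le_eqVlt; apply/orP; left; apply/eqP; rewrite expr2; ring.
Qed.


Lemma fin_ineq F : uniq F ->
  \sum_(x <- F) \sum_(y <- F) Q2 (x, y) + 2 * \sum_(x <- F) f x ^+ 2 * (lam * m x - V x)
   - 2 * (c ^+ 2 * \sum_(x <- F) f x ^+ 2 * (Sm (b x) - \sum_(y <- F) b x y))
   <= \sum_(x <- F) \sum_(y <- F) P2 (x, y).
Proof.
move=> uF.
rewrite [X in _ <= X](eq_bigr (fun x => \sum_(y <- F) Q2 (x, y) + \sum_(y <- F) tau x y + \sum_(y <- F) tau y x));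
  last by move=> x _; rewrite -!big_split; apply: eq_bigr => y _; rewrite P2_id.
rewrite !big_split /=.
have -> : \sum_(i <- F) \sum_(y <- F) tau y i = \sum_(i <- F) \sum_(y <- F) tau i y.
  by rewrite exchange_big.
have h : \sum_(x <- F) (f x ^+ 2 * (lam * m x - V x) - c ^+ 2 * f x ^+ 2 * (Sm (b x) - \sum_(y <- F) b x y))
   <= \sum_(x <- F) \sum_(y <- F) tau x y.
  by apply: ler_sum => x _; exact: tau_row.
move: h; rewrite sumrB.
have -> : \sum_(x <- F) c ^+ 2 * f x ^+ 2 * (Sm (b x) - \sum_(y <- F) b x y) =
  c ^+ 2 * \sum_(x <- F) f x ^+ 2 * (Sm (b x) - \sum_(y <- F) b x y).
  by rewrite mulr_sumr; apply: eq_bigr => x _; rewrite mulrA.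
lra.
Qed.


Lemma partA : lam * N + Sm Q2 / 2 <= energyV b V f.
Proof.
have eE : energy b f = 2^-1 * Sm P2 by [].
rewrite /energyV eE.
apply: le_eps => e e0.
pose K := 2 + `|lam| + c ^+ 2.
have K0 : 0 < K by rewrite /K; have := sqr_ge0 c; have := normr_ge0 lam; lra.
pose ep := e / K.
have ep0 : 0 < ep by rewrite divr_gt0.
have eK : `|lam| * ep + c ^+ 2 * ep + 2 * ep = e.
  have Kn : K != 0 by rewrite gt_eqF.
  move: Kn; rewrite /ep /K => Kn; field => //.
have [sQ [uQ hQ]] := Sm_approx sm_Q2.1 ep0.
have [sT [uT hT]] := Sm_approx sm_T2 ep0.
have [sN [uN hN]] := Sm_approx fl2 ep0.
have [sV [uV hV]] := Sm_approx Vsm ep0.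
pose F := undup (map fst sQ ++ map snd sQ ++ map fst sT ++ map snd sT ++ sN ++ sV).
have uF : uniq F := undup_uniq _.
have inF : forall x, x \in map fst sQ ++ map snd sQ ++ map fst sT ++ map snd sT ++ sN ++ sV -> x \in F.
  by move=> x; rewrite mem_undup.
have f0 : nn (fun x => f x ^+ 2 * m x) by case: fl2.
have w0 : nn (fun x => `|V x| * f x ^+ 2) by case: Vsm.
have h1 := pairs_le_Sm sm_P2 uF uF.
have h2 : \sum_(p <- sQ) Q2 p <= \sum_(x <- F) \sum_(y <- F) Q2 (x, y).
  apply: pair_sub => //; first by case: sm_Q2 => -[].
  by move=> p ps; rewrite !inF // !mem_cat ?(map_f fst ps) ?(map_f snd ps) ?orbT.
have h3 : \sum_(x <- sN) f x ^+ 2 * m x <= \sum_(x <- F) f x ^+ 2 * m x.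
  by apply: sum_sub => // x xs; rewrite inF // !mem_cat xs !orbT.
have h3' : \sum_(x <- F) f x ^+ 2 * m x <= N := Sm_ub fl2 uF.
have hw : forall x, `|V x * f x ^+ 2| <= `|V x| * f x ^+ 2.
  by move=> x; rewrite normrM [`|f x ^+ 2|]ger0_norm // sqr_ge0.
have [_ [_ h4]] := sumR_gen_approx Vsm hw uF.
have hs : sumR (fun x => V x * f x ^+ 2) =
  Sm (posp (fun x => V x * f x ^+ 2)) - Sm (negp (fun x => V x * f x ^+ 2)) by [].
rewrite -hs in h4.
have h4' : \sum_(x <- sV) `|V x| * f x ^+ 2 <= \sum_(x <- F) `|V x| * f x ^+ 2.
  by apply: sum_sub => // x xs; rewrite inF // !mem_cat xs !orbT.
have T0 : nn T2 by case: sm_T2.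
have h5 : \sum_(p <- sT) T2 p <= \sum_(x <- F) \sum_(y <- F) T2 (x, y).
  apply: pair_sub => // p ps.
  by rewrite !inF // !mem_cat ?(map_f fst ps) ?(map_f snd ps) ?orbT.
have h5' := rows_le sm_T2 uF.
have e5 : \sum_(x <- F) f x ^+ 2 * (Sm (b x) - \sum_(y <- F) b x y) =
  \sum_(x <- F) Sm (fun y => T2 (x, y)) - \sum_(x <- F) \sum_(y <- F) T2 (x, y).
  rewrite -sumrB; apply: eq_bigr => x _.
  have [_ ->] := Sm_scale (bsm x) (sqr_ge0 (f x)).
  by rewrite /T2 /= -mulr_sumr mulrBr.
have D0 : 0 <= \sum_(x <- F) f x ^+ 2 * (Sm (b x) - \sum_(y <- F) b x y).
  apply: sumr_ge0 => x _; apply: mulr_ge0; first exact: sqr_ge0.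
  by rewrite subr_ge0; apply: Sm_ub.
have h5'' : \sum_(x <- F) f x ^+ 2 * (Sm (b x) - \sum_(y <- F) b x y) <= ep.
  rewrite e5; lra.
have hc : c ^+ 2 * \sum_(x <- F) f x ^+ 2 * (Sm (b x) - \sum_(y <- F) b x y) <= c ^+ 2 * ep.
  by apply: ler_wpM2l => //; exact: sqr_ge0.
have hF := fin_ineq uF.
have eL : \sum_(x <- F) f x ^+ 2 * (lam * m x - V x) =
  lam * \sum_(x <- F) f x ^+ 2 * m x - \sum_(x <- F) V x * f x ^+ 2.
  by rewrite mulr_sumr -sumrB; apply: eq_bigr => x _; ring.
rewrite eL in hF.
have eN : N = Sm (fun x => f x ^+ 2 * m x) by [].
have hlam : lam * N - `|lam| * ep <= lam * \sum_(x <- F) f x ^+ 2 * m x.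
  have d0 : 0 <= N - \sum_(x <- F) f x ^+ 2 * m x by lra.
  have d1 : N - \sum_(x <- F) f x ^+ 2 * m x <= ep by lra.
  have : lam * N - lam * \sum_(x <- F) f x ^+ 2 * m x <= `|lam| * ep.
    rewrite -mulrBr; apply: le_trans (_ : `|lam| * (N - \sum_(x <- F) f x ^+ 2 * m x) <= _).
      by apply: ler_wpM2r => //; rewrite ler_norm.
    by apply: ler_wpM2l.
  lra.
move: h4; rewrite ler_norml => /andP [h4a h4b].
lra.
Qed.

End PartA.

Lemma sum_ind (R : realType) (T : eqType) (F : T -> R) s t : uniq s -> uniq t -> {subset s <= t} ->
  \sum_(e <- s) F e = \sum_(e <- t) (e \in s)%:R * F e.
Proof.
move=> us ut st.
have -> : \sum_(e <- t) (e \in s)%:R * F e = \sum_(e <- t | e \in s) F e.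
  by rewrite [RHS]big_mkcond; apply: eq_bigr => e _; case: (e \in s); rewrite ?mul1r ?mul0r.
rewrite -[RHS]big_filter; apply: perm_big.
apply: uniq_perm => //; first exact: filter_uniq.
by move=> x; rewrite mem_filter; case: (boolP (x \in s)) => // /st ->.
Qed.

Section Poinc.
Variables (R : realType) (X : choiceType) (b : X -> X -> R) (m g : X -> R) (D : set X) (Rc Wv : R).
Hypothesis b0 : forall x y, 0 <= b x y.
Hypothesis bsym : forall x y, b x y = b y x.
Hypothesis m0 : forall x, 0 < m x.
Variable gam : X -> seq X.
Hypothesis gamP : forall x, [/\ is_path b x (gam x), D (last x (gam x)), uniq (x :: gam x)
  & path_length b x (gam x) <= Rc].
Hypothesis Rc0 : 0 <= Rc.
Hypothesis Wv0 : 0 <= Wv.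
Hypothesis volb : forall u (F : seq X), uniq F -> \sum_(x <- F | dist b u x <= Rc) m x <= Wv.
Hypothesis gD : forall x, D x -> g x = 0.

Definition hg (p : X * X) := b p.1 p.2 * (g p.1 - g p.2) ^+ 2.
Hypothesis smh : sm hg.

Definition st x := steps x (gam x).
Definition swp (e : X * X) := (e.2, e.1).

Lemma hg0 p : 0 <= hg p.
Proof. apply: mulr_ge0 => //; exact: sqr_ge0. Qed.

Lemma hg_swp p : hg (swp p) = hg p.
Proof. by rewrite /hg /swp /= bsym; congr (_ * _); rewrite -sqrrN opprB. Qed.

Lemma per_x x : g x ^+ 2 <= Rc * \sum_(e <- st x) hg e.
Proof.
have [px Dl ux lx] := gamP x.
have := path_CS b0 g px; rewrite (gD Dl) subr0 => h; apply: le_trans h _.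
apply: ler_wpM2r => //; apply: sumr_ge0 => e _; exact: hg0.
Qed.

Lemma near_x x e : e \in st x -> dist b e.1 x <= Rc.
Proof.
move=> ein; have [px Dl ux lx] := gamP x.
have [h1 _] := steps_mem ein.
have [p [pp lp]] := path_prefix b0 px h1.
rewrite dist_sym //; apply: le_trans (dist_le b0 pp) _; exact: le_trans lp lx.
Qed.

Lemma near_x' x e : swp e \in st x -> dist b e.1 x <= Rc.
Proof.
move=> ein; have [px Dl ux lx] := gamP x.
have [_ h1] := steps_mem ein.
have h2 : e.1 \in x :: gam x by rewrite inE h1 orbT.
have [p [pp lp]] := path_prefix b0 px h2.
rewrite dist_sym //; apply: le_trans (dist_le b0 pp) _; exact: le_trans lp lx.
Qed.

Lemma ind_le x e : ((e \in st x)%:R + (swp e \in st x)%:R : R) <= (nat_of_bool (dist b e.1 x <= Rc)%R)%:R.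
Proof.
have [px Dl ux lx] := gamP x.
case: (boolP (e \in st x)) => h1.
  have -> : (swp e \in st x) = false.
    apply/negP => h2; case: e h1 h2 => u v h1 h2; exact: steps_norev ux h1 h2.
  by rewrite (near_x h1) /= addr0.
case: (boolP (swp e \in st x)) => h2; last by rewrite add0r ler0n.
by rewrite (near_x' h2) /= add0r.
Qed.

Lemma poinc_fin F : uniq F -> \sum_(x <- F) g x ^+ 2 * m x <= Rc * Wv / 2 * Sm hg.
Proof.
move=> uF.
pose E := undup (flatten [seq st x ++ map swp (st x) | x <- F]).
have uE : uniq E := undup_uniq _.
have inE1 : forall x e, x \in F -> e \in st x -> e \in E.
  move=> x e xF ein; rewrite mem_undup; apply/flatten_mapP; exists x => //.
  by rewrite mem_cat ein.
have clE : forall e, e \in E -> swp e \in E.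
  move=> e; rewrite !mem_undup => /flatten_mapP [x xF]; rewrite mem_cat => /orP [h|h].
    by apply/flatten_mapP; exists x => //; rewrite mem_cat (map_f swp h) orbT.
  apply/flatten_mapP; exists x => //; rewrite mem_cat; apply/orP; left.
  by move/mapP: h => [e' e'in ->]; case: e' e'in.
pose w e := \sum_(x <- F) m x * (e \in st x)%:R.
have step1 : \sum_(x <- F) g x ^+ 2 * m x <= Rc * \sum_(e <- E) hg e * w e.
  have -> : \sum_(e <- E) hg e * w e = \sum_(x <- F) m x * \sum_(e <- st x) hg e.
    have eqx : forall x, x \in F -> m x * \sum_(e <- st x) hg e = \sum_(e <- E) m x * ((e \in st x)%:R * hg e).
      move=> x xF; rewrite -mulr_sumr; congr (_ * _); apply: sum_ind => //.
        by have [_ _ ux _] := gamP x; exact: steps_uniq.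
      by move=> e; exact: inE1.
    rewrite [RHS]big_seq (eq_bigr _ eqx) -big_seq.
    rewrite exchange_big /=; apply: eq_bigr => e _; rewrite /w mulr_sumr.
    by apply: eq_bigr => x _; ring.
  rewrite mulr_sumr; apply: ler_sum => x _.
  rewrite mulrC [Rc * _]mulrCA; apply: ler_wpM2l; first exact: ltW.
  exact: per_x.
have step2 : \sum_(e <- E) hg e * w e = \sum_(e <- E) hg e * w (swp e).
  have pE : perm_eq (map swp E) E.
    apply: uniq_perm => //.
      by rewrite map_inj_uniq // => -[? ?] [? ?] [-> ->].
    move=> e; apply/mapP/idP => [[e' e'in ->]|eE]; first exact: clE.
    by exists (swp e); [exact: clE|case: e {eE}].
  rewrite -[RHS](perm_big _ pE) big_map; apply: eq_bigr => e _.
  by rewrite hg_swp; case: e.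
have step3 : \sum_(e <- E) hg e * (w e + w (swp e)) <= Wv * Sm hg.
  have wle : forall e, w e + w (swp e) <= Wv.
    move=> e; rewrite /w -big_split /=.
    apply: le_trans (volb e.1 uF); rewrite [X in _ <= X]big_mkcond /=.
    apply: ler_sum => x _.
    rewrite -mulrDr; have := ind_le x e; case: (dist b e.1 x <= Rc) => h.
      by apply: ler_piMr => //; exact: ltW.
    by apply: mulr_ge0_le0; [exact: ltW|].
  apply: le_trans (_ : \sum_(e <- E) hg e * Wv <= _).
    apply: ler_sum => e _; apply: ler_wpM2l => //; exact: hg0.
  rewrite -mulr_suml mulrC; apply: ler_wpM2l.
    exact: Wv0.
  exact: Sm_ub.
have hE : 0 <= \sum_(e <- E) hg e * w e.
  apply: sumr_ge0 => e _; apply: mulr_ge0; first exact: hg0.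
  by apply: sumr_ge0 => x _; apply: mulr_ge0; [exact: ltW|exact: ler0n].
have : 2 * \sum_(e <- E) hg e * w e <= Wv * Sm hg.
  apply: le_trans step3; rewrite mulr2n mulrDl mul1r {2}step2 -big_split /=.
  by rewrite le_eqVlt; apply/orP; left; apply/eqP; apply: eq_bigr => e _; rewrite mulrDr.
move=> h2; apply: le_trans step1 _.
have := ler_wpM2l Rc0 h2; lra.
Qed.

End Poinc.

From mathcomp Require Import finmap.

Lemma sum_cst (R : realType) (T : Type) (s : seq T) (k : R) : \sum_(y <- s) k = (size s)%:R * k.
Proof. elim: s => [|y s IH]; first by rewrite big_nil mul0r. by rewrite big_cons IH /= -addn1 natrD; ring. Qed.

Lemma nb_fin (R : realType) (X : choiceType) (a : X -> R) (L : R) : sm a -> 0 < L ->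
  exists l, uniq l /\ forall y, y \in l <-> L^-1 <= a y.
Proof.
move=> sa Lp; have a0 : nn a by case: sa.
pose A := [set y | L^-1 <= a y].
have fA : finite_set A.
  apply: contrapT => inf.
  pose n := (Num.bound (Sm a * L)).+1.
  have [B BA nB] := infinite_set_fset n inf.
  have hB : \sum_(y <- B) L^-1 <= \sum_(y <- B) a y.
    rewrite big_seq_cond [X in _ <= X]big_seq_cond.
    by apply: ler_sum => y /andP [yB _]; apply: BA.
  have := Sm_ub sa (finmap.fset_uniq B); have := hB.
  rewrite sum_cst => h1 h2.
  have nB' : (n <= size B)%N by [].
  have hn : (n%:R : R) * L^-1 <= Sm a.
    apply: le_trans (le_trans h1 h2); rewrite -mulr_natl; apply: ler_wpM2r.
      by rewrite invr_ge0 ltW.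
    by rewrite mulr1 ler_nat.
  have : Sm a * L < n%:R.
    apply: lt_le_trans (archi_boundP _) _.
      by apply: mulr_ge0; [apply: Sm_ge0|exact: ltW].
    by rewrite ler_nat.
  move: hn; rewrite -(ler_pM2r Lp) -mulrA mulVf ?gt_eqF // mulr1 => hn.
  lra.
have [s es] := (finite_seqP A).1 fA.
exists (undup s); split; first exact: undup_uniq.
move=> y; rewrite mem_undup; have : A y <-> [set` s] y by rewrite es.
by move=> [h1 h2]; split => [/h2|/h1].
Qed.

Theorem theorem7p1 (R : realType) (X : choiceType) (b : X -> X -> R) (m : X -> R)
  (V : X -> R) (D : set X) (phi : X -> R) (c : R) :
  weighted_graph b m -> connected_graph b -> condB b m -> condM m ->
  (exists K : R, forall x, `|V x| <= K) ->
  relatively_dense b D ->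
  regular_ground_state b m V phi c ->
  forall f : X -> R, l2 m f -> (forall x, D x -> f x = 0) ->
  energyV b V f >=
    (bottom_spectrum b m V +
      (c ^+ 4 * covering_radius b D *
        fine (volsup b m (c ^+ 2 * covering_radius b D)))^-1) * norm2 m f.
Proof.
move=> [cnt [b0 [bsym [bxx [degfin m0]]]]] conn [C hC] [M hM] [Kv hK] rd
  [[phi0 [phisum gsx]] [c1 phic]] f fl2 fD.
set lam := bottom_spectrum b m V.
set Rc := covering_radius b D.
set Wv := fine (volsup b m (c ^+ 2 * Rc)).
have bsm : forall x, sm (b x) by move=> x; split; [move=> y; exact: b0|exact: degfin].
pose C' := Num.max C 0.
have C0 : 0 <= C' by rewrite le_max lexx orbT.
have Cb : forall x, Sm (b x) <= C' * m x.
  move=> x; have h := hC x; have mx := m0 x.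
  have h2 : Sm (b x) <= C * m x.
    have := ler_wpM2r (ltW mx) h.
    have mn : m x != 0 by rewrite gt_eqF.
    have -> : (m x)^-1 * fine (esumX (b x)) * m x = Sm (b x) by rewrite /Sm /esumX; field.
    done.
  apply: le_trans h2 _; apply: ler_wpM2r; [exact: ltW|by rewrite le_max lexx].
have fl2' : sm (fun x => f x ^+ 2 * m x).
  by split; [move=> x; apply: mulr_ge0; [exact: sqr_ge0|exact: ltW]|exact: fl2].
have c0 : 0 < c by apply: lt_le_trans ltr01 c1.
pose B0 := Num.max (C' * M) 1.
have B0p : 0 < B0 by rewrite lt_max ltr01 orbT.
have bB0 : forall x y, b x y <= B0.
  move=> x y; apply: le_trans (_ : C' * M <= _); last by rewrite le_max lexx.
  apply: (le_trans _ (le_trans (Cb x) _)); last by apply: ler_wpM2l.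
  have := Sm_ub (bsm x) (isT : uniq [:: y]); by rewrite big_seq1.
have Rc0 : 0 <= Rc.
  by apply: lb_le_inf => // r [r0 _]; exact: ltW.
have cover : forall r, Rc < r -> forall x, exists p, D p /\ dist b p x < r.
  move=> r hr x; have [r' [r'0 hr'] r'r] := inf_lt rd hr.
  have [p [Dp bp]] := hr' x; exists p; split => //; exact: le_lt_trans bp r'r.
have approx : forall x d, 0 < d ->
    exists s, [/\ is_path b x s, D (last x s) & path_length b x s <= Rc + d].
  move=> x d d0.
  have d2 : Rc < Rc + d / 2 by rewrite ltrDl divr_gt0.
  have [p [Dp dp]] := cover _ d2 x.
  rewrite dist_sym // in dp.
  have ne : [set path_length b x s | s in path_from_to b x p] !=set0.
    by have [s hs] := conn x p; exists (path_length b x s), s.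
  have [_ [s [ps ls] <-] lt] := inf_lt ne dp.
  exists s; split => //; first by rewrite ls.
  apply: le_trans (ltW lt) _; rewrite lerD2l ler_pdivrMr // ler_pMr //.
  by rewrite ler1n.
have L0 : 0 < Rc + 1 by apply: lt_le_trans ltr01 _; rewrite lerDr.
have [NB NBP] := choice (fun x => nb_fin (bsm x) L0).
have NBP' : forall x y, y \in NB x <-> (Rc + 1)^-1 <= b x y by move=> x' y; have [_ h] := NBP x'; exact: h.
have Hg : forall x, exists s,
    [/\ is_path b x s, D (last x s), uniq (x :: s) & path_length b x s <= Rc].
  move=> x; exact: (good_path b0 B0p bB0 L0 NBP' Rc0 erefl (approx x)).
have [gam gamP] := choice Hg.
pose K' := Num.max Kv 0.
have K0 : 0 <= K' by rewrite le_max lexx orbT.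
have coef0 : 0 <= K' * C' * Rc by apply: mulr_ge0 => //; apply: mulr_ge0.
have Vsm : sm (fun x => `|V x| * f x ^+ 2).
  have [sw _] := Sm_scale fl2' coef0.
  suff : sm (fun x => `|V x| * f x ^+ 2) /\
    Sm (fun x => `|V x| * f x ^+ 2) <= Sm (fun x => K' * C' * Rc * (f x ^+ 2 * m x)) by case.
  apply: Sm_le_pt => // x; first by apply: mulr_ge0; [exact: normr_ge0|exact: sqr_ge0].
  have [fx0|fxn] := eqVneq (f x) 0.
    rewrite fx0 expr0n /= mulr0 mul0r mulr0; exact: lexx.
  have nD : ~ D x by move=> Dx; move: fxn; rewrite (fD _ Dx) eqxx.
  have [px Dl ux lx] := gamP x.
  move: px Dl lx; case: (gam x) => [_ /nD //|y s' [bxy _] _ /= lx].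
  have ib : (b x y)^-1 <= Rc.
    apply: le_trans lx; rewrite lerDl; exact: path_length_ge0.
  have h1 : 1 <= b x y * Rc.
    have := ler_wpM2l (ltW bxy) ib; rewrite mulfV ?gt_eqF //.
  have h2 : b x y <= C' * m x.
    apply: le_trans (Cb x); have := Sm_ub (bsm x) (isT : uniq [:: y]); by rewrite big_seq1.
  have h3 : 1 <= C' * m x * Rc.
    apply: le_trans h1 _; apply: ler_wpM2r => //.
  have hV : `|V x| <= K' by apply: le_trans (hK x) _; rewrite le_max lexx.
  have f2 : 0 <= f x ^+ 2 by exact: sqr_ge0.
  have : `|V x| * f x ^+ 2 <= K' * f x ^+ 2 by apply: ler_wpM2r.
  move=> h4; apply: le_trans h4 _.
  have -> : K' * C' * Rc * (f x ^+ 2 * m x) = K' * f x ^+ 2 * (C' * m x * Rc) by ring.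
  rewrite -[X in X <= _]mulr1; apply: ler_wpM2l => //; exact: mulr_ge0.
have hA := partA b0 bsym bsm m0 C0 Cb phi0 phic c1 gsx fl2' Vsm.
have eN : norm2 m f = N m f by [].
have Q0 : 0 <= Sm (Q2 b phi f).
  by apply: Sm_ge0; case: (sm_Q2 b0 bsym bsm C0 Cb phi0 phic c1 fl2') => -[].
have N0 : 0 <= N m f by apply: Sm_ge0; case: fl2'.
rewrite eN.
have [Z0|Znz] := eqVneq (c ^+ 4 * Rc * Wv) 0.
  rewrite Z0 invr0 addr0; lra.
have [NN0|NNn] := eqVneq (N m f) 0.
  rewrite NN0 mulr0; rewrite NN0 mulr0 in hA; lra.
have [x0 fx0] : exists x0, f x0 != 0.
  apply: contrapT => H; move: NNn; rewrite eq_le N0 andbT => /negP; apply.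
  have [_ ->] // : sm (fun x => f x ^+ 2 * m x) /\ N m f <= 0.
  apply: Sm_le => [x|s us]; first by apply: mulr_ge0; [exact: sqr_ge0|exact: ltW].
  rewrite big1 // => x _.
  have -> : f x = 0 by apply/eqP; apply: contrapT => h; apply: H; exists x; apply/negP.
  by rewrite expr0n mul0r.
move: Znz; rewrite !mulf_eq0 !negb_or => /andP [/andP [_ Rcn] Wvn].
have Rcp : 0 < Rc by rewrite lt_def Rcn Rc0.
have [r vE] : exists r, volsup b m (c ^+ 2 * Rc) = r%:E.
  move: Wvn; rewrite /Wv; case: (volsup b m (c ^+ 2 * Rc)) => [r _|/=|/=]; last 2 first.
  - by rewrite eqxx.
  - by rewrite eqxx.
  by exists r.
have eW : Wv = r by rewrite /Wv vE.
have volub : forall u, (vol m (Defs.ball b u (c ^+ 2 * Rc)) <= Wv%:E)%E.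
  by move=> u; rewrite eW -vE; apply: ereal_sup_ubound; exists u.
have Rcle : Rc <= c ^+ 2 * Rc.
  by rewrite ler_peMl // -(expr1n _ 2) lerXn2r ?nnegrE ?ler01 //; exact: ltW.
have volb : forall u (F : seq X), uniq F -> \sum_(x <- F | dist b u x <= Rc) m x <= Wv.
  move=> u F uF; rewrite -lee_fin; apply: le_trans (volub u).
  rewrite /vol; apply: esum_ge.
  exists [set` seq.filter (fun x => dist b u x <= Rc) F].
    split => // x /=; rewrite mem_filter => /andP [h _].
    by rewrite /Defs.ball /=; apply: le_trans h Rcle.
  by rewrite fsumEFin // -fsbig_seq ?filter_uniq // big_filter.
have Wv0 : 0 <= Wv.
  rewrite -lee_fin; apply: le_trans (volub x0); apply: esum_ge0 => x _.
  by rewrite lee_fin; exact: ltW.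
have Wvp : 0 < Wv by rewrite lt_def Wvn Wv0.
pose g := gg phi f.
have gD : forall x, D x -> g x = 0 by move=> x Dx; rewrite /g /gg (fD _ Dx) mul0r.
have smh : sm (hg b g) := sm_hh b0 bsym bsm C0 Cb phi0 phic c1 fl2'.
have hP := poinc_fin b0 bsym m0 gamP Rc0 Wv0 volb gD smh.
have ng0 : nn (fun x => g x ^+ 2 * m x) by move=> x; apply: mulr_ge0; [exact: sqr_ge0|exact: ltW].
have [sng hng] := Sm_le ng0 hP.
have c20 : 0 <= c ^+ 2 by exact: sqr_ge0.
have [sng2 eng2] := Sm_scale sng c20.
have hNg : N m f <= c ^+ 2 * Sm (fun x => g x ^+ 2 * m x).
  rewrite -eng2.
  suff : sm (fun x => f x ^+ 2 * m x) /\ N m f <= Sm (fun x => c ^+ 2 * (g x ^+ 2 * m x)) by case.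
  apply: Sm_le_pt (proj1 fl2') sng2 _ => x. rewrite mulrA; apply: ler_wpM2r; first exact: ltW.
  have -> : f x = g x * phi x by rewrite /g /gg mulrAC -mulrA mulfV ?gt_eqF // mulr1.
  rewrite exprMn mulrC; apply: ler_wpM2r; first exact: sqr_ge0.
  have [_ h] := phic x; rewrite lerXn2r ?nnegrE //; exact: ltW.
have hQ := Q2_ge b0 bsym bsm C0 Cb phi0 phic c1 fl2'.
have hh2 : Sm (hg b g) <= c ^+ 2 * Sm (Q2 b phi f).
  have cn : c ^+ 2 != 0 by rewrite expf_neq0 // gt_eqF.
  have := ler_wpM2l c20 hQ; rewrite mulrA mulrV ?unitfE // mul1r => h; exact: h.
set Z := c ^+ 4 * Rc * Wv.
have Zp : 0 < Z by rewrite /Z !mulr_gt0 // exprn_gt0.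
have key : N m f <= Z * (Sm (Q2 b phi f) / 2).
  apply: le_trans hNg _.
  apply: le_trans (ler_wpM2l c20 hng) _.
  have RW0 : 0 <= Rc * Wv / 2 by apply: divr_ge0 => //; apply: mulr_ge0; exact: ltW.
  apply: le_trans (ler_wpM2l c20 (ler_wpM2l RW0 hh2)) _.
  rewrite /Z le_eqVlt; apply/orP; left; apply/eqP; ring.
have : Z^-1 * N m f <= Sm (Q2 b phi f) / 2.
  by rewrite ler_pdivrMl // .
move=> hz; rewrite mulrDl; lra.
Qed.
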